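(* Let $\mathscr{H}$ be a complex Hilbert space, $N(\cdot)$ a norm on $\mathbb{B}(\mathscr{H})$, and $B,C\in\mathbb{B}(\mathscr{H})$. Then $$\frac{1}{\sqrt2}\max\{w_N(B+C),w_N(B-C)\}\leq w_{(N,e)}(B,C)\leq\frac{1}{\sqrt2}\sqrt{w_N^2(B+C)+w_N^2(B-C)}.$$
   Context: For $T\in\mathbb{B}(\mathscr{H})$: $\Re(T)=\frac12(T+T^* )$ and $w_N(T)=\sup_{\theta\in\mathbb{R}}N(\Re(e^{i\theta}T))$. For $B,C\in\mathbb{B}(\mathscr{H})$, $w_{(N,e)}(B,C)=\sup_{\lambda_1,\lambda_2\in\mathbb{C},\ |\lambda_1|^2+|\lambda_2|^2\leq 1}\sup_{\theta\in\mathbb{R}} N(\Re(e^{i\theta}(\lambda_1B+\lambda_2C)))$. *)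

(* Defs.v *)
From HB Require Import structures.
From mathcomp Require Import all_boot all_order all_algebra.
From mathcomp Require Import all_classical all_reals all_analysis.
From mathcomp Require Import complex.

Set Implicit Arguments.
Unset Strict Implicit.
Unset Printing Implicit Defensive.

Import Order.TTheory GRing.Theory Num.Theory.
Local Open Scope classical_set_scope.
Local Open Scope ring_scope.

(** A complex Hilbert space is modelled by a complex vector space
    [H : lmodType R[i]] (R a real type, R[i] its complexification)
    together with an inner product [ip] (linear in the first argument,
    conjugate-linear in the second) whose induced norm is complete. *)

Section Hilbert.
Variable R : realType.
Local Notation C := R[i].
Variable H : lmodType C.
Variable ip : H -> H -> C.

Definition is_inner_product : Prop :=
  [/\ (forall (a : C) (x y z : H), ip (a *: x + y) z = a * ip x z + ip y z),
      (forall x y : H, ip x y = Num.conj (ip y x)),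
      (forall x : H, 0 <= ip x x) &
      (forall x : H, ip x x = 0 -> x = 0)].

Definition hnorm (x : H) : R := Num.sqrt (complex.Re (ip x x)).

Definition hcauchy (u : nat -> H) : Prop :=
  forall eps : R, 0 < eps -> exists N : nat,
    forall m n : nat, (N <= m)%N -> (N <= n)%N -> hnorm (u m - u n) < eps.

Definition hconverges_to (u : nat -> H) (l : H) : Prop :=
  forall eps : R, 0 < eps -> exists N : nat,
    forall n : nat, (N <= n)%N -> hnorm (u n - l) < eps.

Definition hcomplete : Prop :=
  forall u : nat -> H, hcauchy u -> exists l : H, hconverges_to u l.

Definition is_hilbert : Prop := is_inner_product /\ hcomplete.

Definition bounded_op (T : H -> H) : Prop :=
  (forall (a : C) (x y : H), T (a *: x + y) = a *: T x + T y) /\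
  (exists M : R, forall x : H, hnorm (T x) <= M * hnorm x).

Definition is_adjoint (T S : H -> H) : Prop :=
  bounded_op S /\ forall x y : H, ip (T x) y = ip x (S y).

(** T^* : the adjoint (exists and is unique for T in B(H) on a Hilbert
    space; the default branch is never used for such T). *)
Definition adjoint (T : H -> H) : H -> H :=
  match pselect (exists S, is_adjoint T S) with
  | left h => projT1 (cid h)
  | right _ => fun _ => 0
  end.

Definition op_add (S T : H -> H) : H -> H := fun x => S x + T x.
Definition op_sub (S T : H -> H) : H -> H := fun x => S x - T x.
Definition op_scale (a : C) (T : H -> H) : H -> H := fun x => a *: T x.

Definition opRe (T : H -> H) : H -> H :=
  fun x => (2%:R : C)^-1 *: (T x + adjoint T x).

Definition is_op_norm (N : (H -> H) -> R) : Prop :=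
  forall (a : C) (S T : H -> H), bounded_op S -> bounded_op T ->
  [/\ 0 <= N S,
      N S = 0 -> S = (fun _ => 0),
      N (op_scale a S) = ComplexField.Normc.normc a * N S &
      N (op_add S T) <= N S + N T].

Definition expi (t : R) : C := Complex (cos t) (sin t).

Definition wN (N : (H -> H) -> R) (T : H -> H) : R :=
  sup [set N (opRe (op_scale (expi t) T)) | t in [set: R]].

Definition wNe (N : (H -> H) -> R) (B C' : H -> H) : R :=
  sup [set r : R | exists l1 l2 : C,
         `|l1| ^+ 2 + `|l2| ^+ 2 <= 1 /\
         r = wN N (op_add (op_scale l1 B) (op_scale l2 C'))].

End Hilbert.

(* Main.v *)
Require Import Defs.
From HB Require Import structures.
From mathcomp Require Import all_boot all_order all_algebra.
From mathcomp Require Import all_classical all_reals all_analysis.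
From mathcomp Require Import complex.
From mathcomp Require Import ring lra.
Import Order.TTheory GRing.Theory Num.Theory.
Local Open Scope ring_scope.

Section Cx.
Variable R : realType.
Local Notation C := R[i].
Local Notation nc := (@ComplexField.Normc.normc R).

Lemma normcE (a : C) : `|a| = ((nc a)%:C)%C.
Proof. by case: a. Qed.

Lemma nc_ge0 (a : C) : 0 <= nc a.
Proof. by case: a => x y; rewrite /= sqrtr_ge0. Qed.

Lemma ReD (u v : C) : complex.Re (u + v) = complex.Re u + complex.Re v.
Proof. by case: u; case: v. Qed.

Lemma ReRC (r : R) : complex.Re ((r%:C)%C : C) = r.
Proof. by []. Qed.

Lemma conjRC (r : R) : Num.conj ((r%:C)%C : C) = (r%:C)%C.
Proof. by change (Complex r (- 0) = Complex r 0); rewrite oppr0. Qed.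

Lemma lecRC (r s : R) : (((r%:C)%C : C) <= (s%:C)%C) = (r <= s).
Proof. exact: lecR. Qed.

Lemma ge0_RC (z : C) : 0 <= z -> z = ((complex.Re z)%:C)%C.
Proof. by case: z => a b; rewrite lecE /= => /andP[/eqP -> _]. Qed.

Lemma Re_le_nc (z : C) : complex.Re z <= nc z.
Proof.
case: z => a b /=. rewrite -[a]/(a) .
have h : `|a| <= Num.sqrt (a ^+ 2 + b ^+ 2).
  rewrite -sqrtr_sqr ler_wsqrtr // lerDl sqr_ge0 //.
exact: le_trans (ler_norm a) h.
Qed.

Lemma nc_sqrC (a : C) : a * Num.conj a = ((nc a ^+ 2)%:C)%C.
Proof. by rewrite -normCK normcE -rmorphXn. Qed.

Lemma ncRC (r : R) : 0 <= r -> nc ((r%:C)%C) = r.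
Proof. by move=> r0 /=; rewrite expr0n /= addr0 sqrtr_sqr ger0_norm. Qed.

Lemma cjD (a b : C) : Num.conj (a + b) = Num.conj a + Num.conj b.
Proof. exact: rmorphD. Qed.
Lemma cjM (a b : C) : Num.conj (a * b) = Num.conj a * Num.conj b.
Proof. exact: rmorphM. Qed.
Lemma cjV (a : C) : Num.conj (a^-1) = (Num.conj a)^-1.
Proof. exact: fmorphV. Qed.
Lemma cjN1 : Num.conj (-1 : C) = -1.
Proof. exact: rmorphN1. Qed.
Lemma cj0 : Num.conj (0 : C) = 0.
Proof. exact: rmorph0. Qed.
Lemma cjB (a b : C) : Num.conj (a - b) = Num.conj a - Num.conj b.
Proof. exact: rmorphB. Qed.
Lemma cj2 : Num.conj (2 : C) = 2.
Proof. exact: (rmorph_nat _ 2). Qed.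
Lemma cjK (a : C) : Num.conj (Num.conj a) = a.
Proof. exact: conjCK. Qed.
Lemma ncN1 : nc (-1 : C) = 1.
Proof. by rewrite /= oppr0 expr0n /= addr0 sqrtr_sqr normrN normr1. Qed.
End Cx.
Arguments ncN1 {R}.
Arguments normcE {R}.
Arguments nc_ge0 {R}.
Arguments ReD {R}.
Arguments ReRC {R}.
Arguments conjRC {R}.
Arguments lecRC {R}.
Arguments ge0_RC {R}.
Arguments Re_le_nc {R}.
Arguments nc_sqrC {R}.
Arguments ncRC {R}.
Arguments cjD {R}.
Arguments cjM {R}.
Arguments cjV {R}.
Arguments cjN1 {R}.
Arguments cj0 {R}.
Arguments cjK {R}.
Lemma small_inv (R : realType) (e : R) : 0 < e -> exists N : nat, forall n : nat, (N <= n)%N -> (n.+1%:R)^-1 < e.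
Proof.
move=> e0; exists (Num.truncn e^-1) => n hn.
have h1 := truncnS_gt (e^-1).
have h2 : ((Num.truncn e^-1).+1%:R : R) <= n.+1%:R by rewrite ler_nat ltnS.
rewrite invf_plt ?posrE //; exact: lt_le_trans h1 h2.
Qed.


Section Polar.
Variable R : realType.
Local Notation C := R[i].
Local Notation nc := (@ComplexField.Normc.normc R).

Lemma nc_expi (t : R) : nc (expi t) = 1.
Proof. by rewrite /= cos2Dsin2 sqrtr1. Qed.

Lemma nc_conj (c : C) : nc (Num.conj c) = nc c.
Proof. by case: c => a b /=; rewrite sqrrN. Qed.

Lemma polar (c : C) : exists t : R, c = ((nc c)%:C)%C * expi t.
Proof.
case: c => x y.
set r := nc (Complex x y).
have hr : r = Num.sqrt (x ^+ 2 + y ^+ 2) by [].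
have rge := nc_ge0 (Complex x y).
have [r0|rn0] := eqVneq r 0.
  exists 0; rewrite r0 mul0r; exact: ComplexField.Normc.eq0_normc r0.
have rp : 0 < r by rewrite lt_def rn0 rge.
have r2 : r ^+ 2 = x ^+ 2 + y ^+ 2 by rewrite hr sqr_sqrtr // addr_ge0 ?sqr_ge0.
pose a := x / r; pose b := y / r.
have ab : a ^+ 2 + b ^+ 2 = 1.
  by rewrite /a /b !expr_div_n -mulrDl -r2 divff // expf_neq0.
have a2 : a ^+ 2 <= 1 by have := sqr_ge0 b; lra.
have a1 : a \in `[-1, 1].
  rewrite in_itv /= -ler_norml -(@ler_pXn2r _ 2) ?nnegrE ?normr_ge0 //.
  by rewrite expr1n real_normK ?num_real.
have a1' : -1 <= a <= 1 by move: a1; rewrite in_itv.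
have sa : Num.sqrt (1 - a ^+ 2) = `|b|.
  by rewrite -ab [a ^+ 2 + _]addrC addrK sqrtr_sqr.
have fin u v : u = a -> v = b -> Complex x y = ((r%:C)%C) * Complex u v.
  move=> -> ->; apply/eqP; rewrite eq_complex /=.
  by rewrite /a /b mul0r subr0 mul0r addr0 ![r * _]mulrC !divfK ?eqxx ?gt_eqF.
case: (lerP 0 b) => hb.
  exists (acos a); rewrite /expi; apply: fin; first exact: acosK.
  by rewrite sin_acos // sa ger0_norm.
exists (- acos a); rewrite /expi; apply: fin; first by rewrite cosN acosK.
by rewrite sinN sin_acos // sa ltr0_norm // opprK.
Qed.
Lemma nc0 : nc (0 : C) = 0.
Proof. by rewrite /= expr0n /= addr0 sqrtr0. Qed.
End Polar.
Arguments nc0 {R}.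
Arguments nc_expi {R}.
Arguments nc_conj {R}.
Arguments polar {R}.
Section IP.
Variable R : realType.
Local Notation C := R[i].
Local Notation nc := (@ComplexField.Normc.normc R).
Variable H : lmodType C.
Variable ip : H -> H -> C.
Hypothesis ipH : is_inner_product ip.

Lemma ip_linl a x y z : ip (a *: x + y) z = a * ip x z + ip y z.
Proof. by case: ipH => h _ _ _; apply: h. Qed.
Lemma ip_sym x y : ip x y = Num.conj (ip y x).
Proof. by case: ipH => _ h _ _; apply: h. Qed.
Lemma ip_ge0 x : 0 <= ip x x.
Proof. by case: ipH => _ _ h _; apply: h. Qed.
Lemma ip_def x : ip x x = 0 -> x = 0.
Proof. by case: ipH => _ _ _ h; apply: h. Qed.

Lemma ip0l z : ip 0 z = 0.
Proof.
have := ip_linl 1 0 0 z; rewrite scale1r !addr0 mul1r => h.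
by apply: (@addrI _ (ip 0 z)); rewrite addr0 -h.
Qed.
Lemma ip_addl x y z : ip (x + y) z = ip x z + ip y z.
Proof. by have := ip_linl 1 x y z; rewrite scale1r mul1r. Qed.
Lemma ip_scalel a x z : ip (a *: x) z = a * ip x z.
Proof. by have := ip_linl a x 0 z; rewrite !addr0 ip0l addr0. Qed.
Lemma ip_oppl x z : ip (- x) z = - ip x z.
Proof. by rewrite -scaleN1r ip_scalel mulN1r. Qed.
Lemma ip_subl x y z : ip (x - y) z = ip x z - ip y z.
Proof. by rewrite ip_addl ip_oppl. Qed.
Lemma ip0r x : ip x 0 = 0.
Proof. by rewrite ip_sym ip0l cj0. Qed.
Lemma ip_addr x y z : ip x (y + z) = ip x y + ip x z.
Proof. by rewrite ip_sym ip_addl cjD (ip_sym x y) (ip_sym x z). Qed.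
Lemma ip_scaler a x y : ip x (a *: y) = Num.conj a * ip x y.
Proof. by rewrite ip_sym ip_scalel cjM (ip_sym x y). Qed.
Lemma ip_oppr x y : ip x (- y) = - ip x y.
Proof. by rewrite -scaleN1r ip_scaler cjN1 mulN1r. Qed.
Lemma ip_subr x y z : ip x (y - z) = ip x y - ip x z.
Proof. by rewrite ip_addr ip_oppr. Qed.

Definition q x := complex.Re (ip x x).

Lemma ipxx x : ip x x = ((q x)%:C)%C.
Proof. exact: ge0_RC (ip_ge0 x). Qed.

Lemma q_ge0 x : 0 <= q x.
Proof. by rewrite -lecRC -ipxx ip_ge0. Qed.

Lemma q_eq0 x : q x = 0 -> x = 0.
Proof. by move=> h; apply: ip_def; rewrite ipxx h. Qed.

Lemma hnorm_sqr x : hnorm ip x ^+ 2 = q x.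
Proof. by rewrite /hnorm sqr_sqrtr // q_ge0. Qed.

Lemma hnorm_ge0 x : 0 <= hnorm ip x.
Proof. exact: sqrtr_ge0. Qed.

Lemma ip_ext u v : (forall x, ip x u = ip x v) -> u = v.
Proof.
move=> h; apply/eqP; rewrite -subr_eq0; apply/eqP; apply: ip_def.
by rewrite ip_subr h subrr.
Qed.

Lemma CS_C x y : `|ip x y| ^+ 2 <= ip x x * ip y y.
Proof.
have [->|y0] := eqVneq y 0; first by rewrite ip0r ip0l normr0 expr0n /= mulr0.
have g0 : ip y y != 0 by apply: contra_neq y0; apply: ip_def.
have gJ : Num.conj (ip y y) = ip y y by rewrite geC0_conj // ip_ge0.
pose s := ip x y / ip y y.
have := ip_ge0 (x - s *: y).
rewrite ip_subl !ip_subr !ip_scalel !ip_scaler.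
rewrite /s cjM cjV gJ [ip y x]ip_sym normCK.
set c := ip x y; set g := ip y y; set a := ip x x.
have -> : a - Num.conj c / g * c - (c / g * Num.conj c - c / g * (Num.conj c / g * g))
   = a - c * Num.conj c / g by field.
rewrite subr_ge0 ler_pdivrMr //.
by rewrite lt_def g0 ip_ge0.
Qed.

Lemma CS x y : nc (ip x y) <= hnorm ip x * hnorm ip y.
Proof.
have := CS_C x y; rewrite normcE -rmorphXn /= ipxx (ipxx y) -rmorphM /= lecRC => h.
rewrite /hnorm -sqrtrM ?q_ge0 //.
rewrite -(ger0_norm (nc_ge0 (ip x y))) -sqrtr_sqr.
by apply: ler_wsqrtr.
Qed.

Lemma q_add x y : q (x + y) = q x + q y + 2 * complex.Re (ip x y).
Proof.
rewrite /q ip_addl !ip_addr [ip y x]ip_sym.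
set c := ip x y.
rewrite !ReD.
have -> : complex.Re (Num.conj c) = complex.Re c by case: (c).
lra.
Qed.

Lemma hnorm_add x y : hnorm ip (x + y) <= hnorm ip x + hnorm ip y.
Proof.
rewrite -(@ler_pXn2r _ 2) ?nnegrE ?addr_ge0 ?hnorm_ge0 //.
rewrite sqrrD !hnorm_sqr q_add.
have := le_trans (Re_le_nc (ip x y)) (CS x y).
lra.
Qed.

Lemma q_scale a x : q (a *: x) = nc a ^+ 2 * q x.
Proof.
rewrite /q ip_scalel ip_scaler mulrA nc_sqrC ipxx -rmorphM.
by [].
Qed.

Lemma hnorm_scale a x : hnorm ip (a *: x) = nc a * hnorm ip x.
Proof.
change (Num.sqrt (q (a *: x)) = nc a * Num.sqrt (q x)).
by rewrite q_scale sqrtrM ?sqr_ge0 // sqrtr_sqr ger0_norm ?nc_ge0.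
Qed.

Hypothesis hc : hcomplete ip.


Local Notation hn := (hnorm ip).

Lemma lt_hn v e : 0 < e -> q v < e ^+ 2 -> hn v < e.
Proof.
move=> e0 h; rewrite -(@ltr_pXn2r _ 2) ?nnegrE ?hnorm_ge0 ?ltW //.
by rewrite hnorm_sqr.
Qed.

Lemma hn_opp v : hn (- v) = hn v.
Proof.
by rewrite -scaleN1r hnorm_scale ncN1 mul1r.
Qed.

Lemma hn_sub u v : hn (u - v) = hn (v - u).
Proof. by rewrite -opprB hn_opp. Qed.

Lemma q_sub x y : q (x - y) = q x + q y - 2 * complex.Re (ip x y).
Proof.
rewrite q_add -scaleN1r q_scale ip_scaler.
rewrite ncN1.
rewrite expr1n mul1r.
have -> : Num.conj (-1 : C) = -1 by exact: cjN1.
rewrite mulN1r.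
have -> : complex.Re (- ip x y) = - complex.Re (ip x y) by case: (ip x y).
lra.
Qed.

Lemma nc_half : nc (2^-1 : C) = 2^-1.
Proof.
have -> : (2^-1 : C) = (((2^-1 : R))%:C)%C by rewrite rmorphV ?unitfE // rmorph_nat.
by rewrite ncRC // invr_ge0 ler0n.
Qed.

Lemma riesz (f : H -> C) (M : R) :
  (forall a x y, f (a *: x + y) = a * f x + f y) ->
  (forall x, nc (f x) <= M * hn x) ->
  exists y, forall x, f x = ip x y.
Proof.
move=> flin fbd.
have f0 : f 0 = 0.
  have := flin 1 0 0; rewrite scale1r !addr0 mul1r => h.
  by apply: (@addrI _ (f 0)); rewrite addr0 -h.
have fadd x y : f (x + y) = f x + f y by have := flin 1 x y; rewrite scale1r mul1r.
have fscale a x : f (a *: x) = a * f x by have := flin a x 0; rewrite !addr0 f0 addr0.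
have fsub x y : f (x - y) = f x - f y.
  by rewrite fadd -scaleN1r fscale mulN1r.
case: (pselect (exists u, f u != 0)) => [[u fu]|nf]; last first.
  exists 0 => x; rewrite ip0r.
  by apply/eqP; apply: contra_notT nf => h; exists x.
pose u1 := (f u)^-1 *: u.
have fu1 : f u1 = 1 by rewrite fscale mulVf.
pose A := [set x | f x = 1]%classic.
pose E := [set q x | x in A]%classic.
pose d := inf E.
have hiE : has_inf E.
  split; first by exists (q u1); exists u1.
  by exists 0 => _ [x _ <-]; exact: q_ge0.
have dle x : f x = 1 -> d <= q x.
  by move=> fx; apply: (ge_inf hiE.2); exists x.
have d0 : 0 <= d by apply: lb_le_inf; [by exists (q u1); exists u1 | move=> _ [x _ <-]; exact: q_ge0].
have seqex n : exists x, f x = 1 /\ q x < d + (n.+1%:R)^-1.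
  have [e [x Ax <-] h] := @inf_adherent R E (n.+1%:R^-1 : R) ltac:(by rewrite invr_gt0 ltr0Sn) hiE.
  by exists x.
have [xs hxs] := choice seqex.
have fxs n : f (xs n) = 1 := (hxs n).1.
have qxs n : q (xs n) < d + n.+1%:R^-1 := (hxs n).2.
have par x y : q (x - y) + q (x + y) = 2 * q x + 2 * q y.
  by rewrite q_sub q_add; lra.
have mid x y : f x = 1 -> f y = 1 -> 4 * d <= q (x + y).
  move=> fx fy; have := dle ((2^-1 : C) *: (x + y)).
  rewrite fscale fadd fx fy q_scale nc_half -mulr2n mulVf ?pnatr_eq0 // => /(_ erefl).
  lra.
have cauchy : hcauchy ip xs.
  move=> eps eps0.
  have [N hN] := @small_inv R (eps^+2 / 4) ltac:(by rewrite divr_gt0 ?exprn_gt0).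
  exists N => m n hm hn'.
  apply: lt_hn => //.
  have := par (xs m) (xs n); have := mid _ _ (fxs m) (fxs n); have := qxs m; have := qxs n.
  have := hN m hm; have := hN n hn'.
  move: (eps ^+ 2) (m.+1%:R^-1 : R) (n.+1%:R^-1 : R) => E2 em en.
  lra.
have [z hz] := hc _ cauchy.
have fz : f z = 1.
  suff : nc (1 - f z) <= 0.
    move=> h; have : nc (1 - f z) = 0 by apply/eqP; rewrite eq_le h nc_ge0.
    by move/ComplexField.Normc.eq0_normc/eqP; rewrite subr_eq0 => /eqP <-.
  apply/ler_addgt0Pr => e e0; rewrite add0r.
  pose K := `|M| + 1.
  have K0 : 0 < K by rewrite /K ltr_pwDr // normr_ge0.
  have [N hN] := hz (e / K) ltac:(by rewrite divr_gt0).
  have hNN := hN N (leqnn N).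
  rewrite -(fxs N) -fsub.
  apply: le_trans (fbd _) _.
  have hge := hnorm_ge0 (xs N - z).
  have : M * hn (xs N - z) <= K * hn (xs N - z).
    by apply: ler_wpM2r => //; rewrite /K (le_trans (ler_norm M)) // lerDl.
  move=> h1; apply: le_trans h1 _.
  have : K * hn (xs N - z) < K * (e / K) by rewrite ltr_pM2l.
  by rewrite [K * (e / K)]mulrC divfK ?gt_eqF // => /ltW.
have qz : q z <= d.
  apply/ler_addgt0Pr => e e0.
  pose s := Num.sqrt (d + 1).
  have s0 : 0 <= s := sqrtr_ge0 _.
  pose K := 2 + 2 * s.
  have K0 : 0 < K by rewrite /K; apply: ltr_wpDr; rewrite ?mulr_ge0 //.
  pose del := Num.min 1 (e / K).
  have del0 : 0 < del by rewrite /del lt_min ltr01 divr_gt0.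
  have del1 : del <= 1 by rewrite /del ge_min lexx.
  have delK : del * K <= e.
    have : del <= e / K by rewrite /del ge_min lexx orbT.
    by rewrite ler_pdivlMr.
  have [N1 hN1] := hz del del0.
  have [N2 hN2] := @small_inv R del del0.
  pose n := maxn N1 N2.
  have hw := hN1 n (leq_maxl _ _).
  have he := hN2 n (leq_maxr _ _).
  have hq := qxs n.
  have hzle : hn z <= hn (xs n) + hn (xs n - z).
    by have := hnorm_add (xs n) (z - xs n); rewrite [xs n + (z - xs n)]addrC subrK hn_sub.
  have hx0 := hnorm_ge0 (xs n).
  have w0 := hnorm_ge0 (xs n - z).
  have hz0 := hnorm_ge0 z.
  have hx2 := hnorm_sqr (xs n).
  have hz2 := hnorm_sqr z.
  have hxS : hn (xs n) <= s.
    rewrite /s /hnorm; apply: ler_wsqrtr; change (q (xs n) <= d + 1).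
    have := le_trans (ltW he) del1; move: hq; move: (n.+1%:R^-1 : R) => en. lra.
  have hzsq : hn z ^+ 2 <= (hn (xs n) + del) ^+ 2.
    rewrite ler_pXn2r ?nnegrE ?addr_ge0 ?(ltW del0) //.
    exact: le_trans hzle (lerD (lexx _) (ltW hw)).
  move: hzsq hx2 hz2 hxS he hq delK.
  move: (hn (xs n)) (hn z) (n.+1%:R^-1 : R) => hx hzz en.
  move=> hzsq hx2 hz2 hxS he hq delK.
  have p1 : hx * del <= s * del by apply: ler_wpM2r => //; exact: ltW.
  have p2 : del * del <= del * 1 by apply: ler_wpM2l => //; exact: ltW.
  have ex : (hx + del) ^+ 2 = hx ^+ 2 + 2 * (hx * del) + del * del by ring.
  have kx : del * K = 2 * del + 2 * (s * del) by rewrite /K; ring.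
  lra.
have orth k : f k = 0 -> ip k z = 0.
  move=> fk.
  pose c := ip z k.
  have qk0 := q_ge0 k.
  pose t : R := (q k + 1)^-1.
  have t0 : 0 < t by rewrite /t invr_gt0; lra.
  have tq : t * q k < 1 by rewrite /t mulrC ltr_pdivrMr ?mul1r; lra.
  pose s : C := ((t%:C)%C) * c.
  have hle : q z <= q (z - s *: k).
    apply: le_trans qz (dle _ _); by rewrite fsub fscale fk mulr0 subr0.
  rewrite q_sub q_scale ip_scaler in hle.
  have e1 : complex.Re (Num.conj s * c) = t * nc c ^+ 2.
    have -> : Num.conj s * c = ((t%:C)%C) * (c * Num.conj c) by rewrite /s cjM conjRC; ring.
    by rewrite nc_sqrC -rmorphM.
  have e2 : nc s = t * nc c by rewrite /s ComplexField.Normc.normcM ncRC // ltW.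
  rewrite e1 e2 exprMn in hle.
  have key : t * (nc c ^+ 2 * (2 - t * q k)) <= 0.
    move: hle; set w := nc c ^+ 2.
    have -> : t * (w * (2 - t * q k)) = 2 * (t * w) - t ^+ 2 * w * q k by ring.
    lra.
  rewrite pmulr_rle0 // pmulr_lle0 in key; last by lra.
  have : nc c ^+ 2 = 0 by apply/eqP; rewrite eq_le key sqr_ge0.
  move/eqP; rewrite expf_eq0 /= => /eqP/ComplexField.Normc.eq0_normc c0.
  by rewrite ip_sym -/c c0 cj0.
have z0 : z != 0.
  by apply/eqP => z0; move: fz; rewrite z0 f0 => /eqP; rewrite eq_sym oner_eq0.
have g0 : ip z z != 0 by apply: contra_neq z0; exact: ip_def.
exists ((ip z z)^-1 *: z) => x.
rewrite ip_scaler cjV geC0_conj ?ip_ge0 //.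
have := orth (x - f x *: z); rewrite fsub fscale fz mulr1 subrr => /(_ erefl).
rewrite ip_subl ip_scalel => /eqP; rewrite subr_eq0 => /eqP ->.
by rewrite mulrC mulfK.
Qed.


Lemma adj_exists T : bounded_op ip T -> exists S, is_adjoint ip T S.
Proof.
case=> Tlin [M hM].
have hM' x : hn (T x) <= `|M| * hn x.
  apply: le_trans (hM x) _; apply: ler_wpM2r; [exact: hnorm_ge0 | exact: ler_norm].
have ex y : exists s, forall x, ip (T x) y = ip x s.
  apply: (@riesz (fun x => ip (T x) y) (`|M| * hn y)).
  - by move=> a x x'; rewrite Tlin ip_linl.
  - move=> x; apply: le_trans (CS _ _) _.
    rewrite mulrAC; apply: ler_wpM2r; [exact: hnorm_ge0 | exact: hM'].
have [S hS] := choice ex.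
exists S; split; last by move=> x y; exact: hS.
split.
- move=> a y y'; apply: ip_ext => x.
  by rewrite -hS !ip_addr !ip_scaler -!hS.
- exists `|M| => y.
  have hq : q (S y) <= `|M| * hn (S y) * hn y.
    rewrite /q -hS; apply: le_trans (Re_le_nc _) _; apply: le_trans (CS _ _) _.
    by apply: ler_wpM2r; [exact: hnorm_ge0 | exact: hM'].
  have := hnorm_ge0 (S y); rewrite le_eqVlt => /orP [/eqP <- | hp].
    by rewrite mulr_ge0 ?normr_ge0 ?hnorm_ge0.
  rewrite -(ler_pM2r hp) -expr2 hnorm_sqr.
  by rewrite mulrAC.
Qed.

Lemma adjoint_spec T : bounded_op ip T -> is_adjoint ip T (adjoint ip T).
Proof.
move=> bT; rewrite /adjoint; case: (pselect _) => [h|h]; first exact: (projT2 (cid h)).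
by exfalso; apply: h; exact: adj_exists.
Qed.
Arguments adjoint_spec {T}.

Lemma adj_unique T S1 S2 : is_adjoint ip T S1 -> is_adjoint ip T S2 -> S1 = S2.
Proof.
move=> [_ h1] [_ h2]; apply: funext => y; apply: ip_ext => x.
by rewrite -h1 -h2.
Qed.

Lemma adjoint_eq T S : bounded_op ip T -> is_adjoint ip T S -> adjoint ip T = S.
Proof. by move=> bT hS; exact: (@adj_unique _ _ _ (adjoint_spec bT) hS). Qed.

Lemma bounded_add S T : bounded_op ip S -> bounded_op ip T -> bounded_op ip (op_add S T).
Proof.
move=> [SL [M1 h1]] [TL [M2 h2]]; split.
  by move=> a x y; rewrite /op_add SL TL scalerDr addrACA.
exists (M1 + M2) => x; rewrite /op_add mulrDl.
exact: le_trans (hnorm_add _ _) (lerD (h1 x) (h2 x)).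
Qed.

Lemma bounded_scale a T : bounded_op ip T -> bounded_op ip (op_scale a T).
Proof.
move=> [TL [M h]]; split.
  by move=> b x y; rewrite /op_scale TL scalerDr !scalerA mulrC.
exists (nc a * M) => x; rewrite /op_scale hnorm_scale -mulrA.
by apply: ler_wpM2l; [exact: nc_ge0 | exact: h].
Qed.

Lemma bounded_adjoint T : bounded_op ip T -> bounded_op ip (adjoint ip T).
Proof. by move=> /adjoint_spec []. Qed.

Lemma adjoint_add S T : bounded_op ip S -> bounded_op ip T ->
  adjoint ip (op_add S T) = op_add (adjoint ip S) (adjoint ip T).
Proof.
move=> bS bT; apply: adjoint_eq; first exact: bounded_add.
split; first by apply: bounded_add; exact: bounded_adjoint.
move=> x y; rewrite /op_add ip_addl ip_addr.
by rewrite (adjoint_spec bS).2 (adjoint_spec bT).2.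
Qed.

Lemma adjoint_scale a T : bounded_op ip T ->
  adjoint ip (op_scale a T) = op_scale (Num.conj a) (adjoint ip T).
Proof.
move=> bT; apply: adjoint_eq; first exact: bounded_scale.
split; first by apply: bounded_scale; exact: bounded_adjoint.
move=> x y; rewrite /op_scale ip_scalel ip_scaler cjK.
by rewrite (adjoint_spec bT).2.
Qed.

Lemma opReE T : opRe ip T = op_scale (2^-1) (op_add T (adjoint ip T)).
Proof. by []. Qed.

Lemma bounded_opRe T : bounded_op ip T -> bounded_op ip (opRe ip T).
Proof.
move=> bT; rewrite opReE; apply: bounded_scale; apply: bounded_add => //.
exact: bounded_adjoint.
Qed.

Lemma opRe_add S T : bounded_op ip S -> bounded_op ip T ->
  opRe ip (op_add S T) = op_add (opRe ip S) (opRe ip T).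
Proof.
move=> bS bT; apply: funext => x.
by rewrite /opRe adjoint_add // /op_add -scalerDr addrACA.
Qed.

Lemma opRe_scaleR (r : R) T : bounded_op ip T ->
  opRe ip (op_scale ((r%:C)%C) T) = op_scale ((r%:C)%C) (opRe ip T).
Proof.
move=> bT; apply: funext => x.
by rewrite /opRe adjoint_scale // conjRC /op_scale -scalerDr !scalerA mulrC.
Qed.



Arguments bounded_scale a {T}.
Arguments bounded_add {S T}.
Arguments bounded_adjoint {T}.
Arguments bounded_opRe {T}.

Variable N : (H -> H) -> R.
Hypothesis hN : is_op_norm ip N.
Local Notation bd := (bounded_op ip).

Lemma N_ge0 S : bd S -> 0 <= N S.
Proof. by move=> bS; case: (hN 0 _ _ bS bS). Qed.
Lemma N_scale a S : bd S -> N (op_scale a S) = nc a * N S.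
Proof. by move=> bS; case: (hN a _ _ bS bS). Qed.
Lemma N_add S T : bd S -> bd T -> N (op_add S T) <= N S + N T.
Proof. by move=> bS bT; case: (hN 0 _ _ bS bT). Qed.

Arguments N_ge0 {S}.
Arguments N_scale a {S}.
Arguments N_add {S T}.
Definition SX X := [set N (opRe ip (op_scale (expi t) X)) | t in [set: R]]%classic.

Lemma el_bound X t : bd X ->
  N (opRe ip (op_scale (expi t) X)) <= 2^-1 * (N X + N (adjoint ip X)).
Proof.
move=> bX; have bE := bounded_scale (expi t) bX.
rewrite opReE N_scale; last by apply: bounded_add => //; exact: bounded_adjoint.
rewrite nc_half; apply: ler_wpM2l; first by rewrite invr_ge0 ler0n.
apply: le_trans (N_add bE (bounded_adjoint bE)) _.
rewrite adjoint_scale // !N_scale //; last exact: bounded_adjoint bX.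
by rewrite (nc_conj (expi t)) nc_expi !mul1r.
Qed.

Lemma hsX X : bd X -> has_sup (SX X).
Proof.
move=> bX; split; first by exists (N (opRe ip (op_scale (expi 0) X))); exists 0.
by exists (2^-1 * (N X + N (adjoint ip X))) => _ [t _ <-]; exact: el_bound.
Qed.

Arguments hsX {X}.
Lemma wN_ge X t : bd X -> N (opRe ip (op_scale (expi t) X)) <= wN ip N X.
Proof. by move=> bX; have h := sup_upper_bound (hsX bX); apply: h; exists t. Qed.

Arguments wN_ge {X} t.
Lemma wN_le X b : (forall t, N (opRe ip (op_scale (expi t) X)) <= b) -> wN ip N X <= b.
Proof.
move=> h; change (sup (SX X) <= b); apply: ge_sup; first by exists (N (opRe ip (op_scale (expi 0) X))); exists 0.
by move=> _ [t _ <-].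
Qed.

Lemma wN_ge0 X : bd X -> 0 <= wN ip N X.
Proof.
move=> bX; apply: le_trans (wN_ge 0 bX).
by apply: N_ge0; apply: bounded_opRe; exact: bounded_scale.
Qed.

Lemma wN_comb X Y al be : bd X -> bd Y ->
  wN ip N (op_add (op_scale al X) (op_scale be Y)) <= nc al * wN ip N X + nc be * wN ip N Y.
Proof.
move=> bX bY; apply: wN_le => t.
have -> : op_scale (expi t) (op_add (op_scale al X) (op_scale be Y)) =
    op_add (op_scale (expi t * al) X) (op_scale (expi t * be) Y).
  by apply: funext => x; rewrite /op_scale /op_add scalerDr !scalerA.
have [t1 e1] := polar (expi t * al).
have [t2 e2] := polar (expi t * be).
rewrite opRe_add; [|exact: bounded_scale _ bX|exact: bounded_scale _ bY].
have hs c u Z : c = ((nc c)%:C)%C * expi u -> bd Z ->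
    opRe ip (op_scale c Z) = op_scale ((nc c)%:C)%C (opRe ip (op_scale (expi u) Z)).
  move=> ec bZ; rewrite -opRe_scaleR; last exact: bounded_scale _ bZ.
  congr (opRe ip _).
  by apply: funext => x; rewrite /op_scale scalerA -ec.
rewrite (hs _ _ _ e1 bX) (hs _ _ _ e2 bY).
have bRX := bounded_opRe (bounded_scale (expi t1) bX).
have bRY := bounded_opRe (bounded_scale (expi t2) bY).
apply: le_trans (N_add (bounded_scale _ bRX) (bounded_scale _ bRY)) _.
rewrite (N_scale _ bRX) (N_scale _ bRY) !ncRC ?nc_ge0 // !ComplexField.Normc.normcM nc_expi !mul1r.
by apply: lerD; apply: ler_wpM2l; rewrite ?nc_ge0 ?wN_ge.
Qed.

Arguments wN_comb {X Y}.
Lemma scale_lower X (r : R) : bd X -> 0 < r ->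
  r * wN ip N X <= wN ip N (op_scale ((r%:C)%C) X).
Proof.
move=> bX r0.
have eX : X = op_add (op_scale ((r^-1)%:C)%C (op_scale ((r%:C)%C) X)) (op_scale 0 X).
  apply: funext => x; rewrite /op_add /op_scale scalerA -rmorphM mulVf ?gt_eqF //.
  by rewrite scale1r scale0r addr0.
have := wN_comb ((r^-1)%:C)%C 0 (bounded_scale ((r%:C)%C) bX) bX.
rewrite -eX ncRC; last by rewrite invr_ge0 ltW.
rewrite nc0 mul0r addr0 => h.
apply: le_trans (ler_wpM2l (ltW r0) h) _.
by rewrite mulrA mulfV ?gt_eqF // mul1r.
Qed.


Arguments wN_ge0 {X}.
Arguments scale_lower {X}.

Lemma main_sec B C' : bd B -> bd C' ->
  (Num.sqrt 2)^-1 * Num.max (wN ip N (op_add B C')) (wN ip N (op_sub B C')) <= wNe ip N B C' /\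
  wNe ip N B C' <= (Num.sqrt 2)^-1 *
    Num.sqrt (wN ip N (op_add B C') ^+ 2 + wN ip N (op_sub B C') ^+ 2).
Proof.
move=> bB bC.
have bP : bd (op_add B C') := bounded_add bB bC.
have eM : op_sub B C' = op_add B (op_scale (-1) C').
  by apply: funext => x; rewrite /op_sub /op_add /op_scale scaleN1r.
have bM : bd (op_sub B C') by rewrite eM; exact: bounded_add bB (bounded_scale _ bC).
set a := wN ip N (op_add B C').
set b := wN ip N (op_sub B C').
have a0 : 0 <= a := wN_ge0 bP.
have b0 : 0 <= b := wN_ge0 bM.
have s2 : 0 < Num.sqrt (2 : R) by rewrite sqrtr_gt0 ltr0n.
set bound := (Num.sqrt 2)^-1 * Num.sqrt (a ^+ 2 + b ^+ 2).
have two0 : (2 : C) != 0 by rewrite pnatr_eq0.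
have elem l1 l2 : `|l1| ^+ 2 + `|l2| ^+ 2 <= 1 ->
    wN ip N (op_add (op_scale l1 B) (op_scale l2 C')) <= bound.
  move=> hl.
  pose al := (l1 + l2) / 2; pose be := (l1 - l2) / 2.
  have -> : op_add (op_scale l1 B) (op_scale l2 C') =
      op_add (op_scale al (op_add B C')) (op_scale be (op_sub B C')).
    apply: funext => x; rewrite /op_add /op_scale /op_sub scalerDr scalerBr addrACA.
    rewrite -scalerDl -scalerBl.
    by congr (_ *: _ + _ *: _); rewrite /al /be; field.
  apply: le_trans (wN_comb al be bP bM) _.
  have hC : `|al| ^+ 2 + `|be| ^+ 2 <= 2^-1 :> C.
    rewrite !normCK /al /be !cjM !cjV cj2 cjD cjB.
    have -> : (l1 + l2) / 2 * ((Num.conj l1 + Num.conj l2) / 2) +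
        (l1 - l2) / 2 * ((Num.conj l1 - Num.conj l2) / 2) =
        2^-1 * (l1 * Num.conj l1 + l2 * Num.conj l2) by field.
    rewrite -!normCK -[X in _ <= X]mulr1; apply: ler_wpM2l => //.
  have hR : nc al ^+ 2 + nc be ^+ 2 <= 2^-1.
    move: hC; rewrite !normcE -!rmorphXn -rmorphD.
    have -> : (2^-1 : C) = ((2^-1 : R)%:C)%C by rewrite rmorphV ?unitfE // rmorph_nat.
    by rewrite lecRC.
  have na0 := nc_ge0 al; have nb0 := nc_ge0 be.
  move: hR na0 nb0; move: (nc al) (nc be) => na nb hR na0 nb0.
  set v := na * a + nb * b.
  have v0 : 0 <= v by rewrite addr_ge0 ?mulr_ge0.
  have cs : v ^+ 2 <= (na ^+ 2 + nb ^+ 2) * (a ^+ 2 + b ^+ 2).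
    have -> : (na ^+ 2 + nb ^+ 2) * (a ^+ 2 + b ^+ 2) = v ^+ 2 + (na * b - nb * a) ^+ 2.
      by rewrite /v; ring.
    by rewrite lerDl sqr_ge0.
  have cs2 : 2 * v ^+ 2 <= a ^+ 2 + b ^+ 2.
    have := ler_wpM2r (addr_ge0 (sqr_ge0 a) (sqr_ge0 b)) hR.
    move: cs; move: (v ^+ 2) => V. lra.
  rewrite /bound -(ler_pM2l s2) mulrA mulfV ?gt_eqF // mul1r.
  rewrite -[v]ger0_norm // -sqrtr_sqr -sqrtrM ?ler0n //.
  exact: ler_wsqrtr.
pose E := [set r : R | exists l1 l2 : C,
         `|l1| ^+ 2 + `|l2| ^+ 2 <= 1 /\
         r = wN ip N (op_add (op_scale l1 B) (op_scale l2 C'))]%classic.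
have wE : wNe ip N B C' = sup E by [].
have E0 : (E !=set0)%classic.
  exists (wN ip N (op_add (op_scale 0 B) (op_scale 0 C'))); exists 0, 0; split => //.
  by rewrite normr0 expr0n /= addr0 ler01.
have ubE : (ubound E) bound by move=> r [l1 [l2 [hl ->]]]; exact: elem.
have up : wNe ip N B C' <= bound by rewrite wE; exact: ge_sup.
split; last exact: up.
have hsE : has_sup E by split => //; exists bound.
have inE l1 l2 : `|l1| ^+ 2 + `|l2| ^+ 2 <= 1 ->
    wN ip N (op_add (op_scale l1 B) (op_scale l2 C')) <= wNe ip N B C'.
  by move=> hl; rewrite wE; have h := sup_upper_bound hsE; apply: h; exists l1, l2.
pose s := Num.sqrt (2 : R).
pose l : C := ((s^-1)%:C)%C.
have nl : `|l| ^+ 2 + `|l| ^+ 2 <= 1.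
  rewrite normcE ncRC ?invr_ge0 ?sqrtr_ge0 // -rmorphXn -rmorphD.
  rewrite -(rmorph1 (real_complex R)) lecRC exprVn sqr_sqrtr ?ler0n //.
  lra.
have nl' : `|l| ^+ 2 + `|- l| ^+ 2 <= 1 by rewrite normrN.
have ha : s^-1 * a <= wNe ip N B C'.
  have e : op_add (op_scale l B) (op_scale l C') = op_scale l (op_add B C').
    by apply: funext => x; rewrite /op_add /op_scale scalerDr.
  apply: le_trans (scale_lower (s^-1) bP _) _; first by rewrite invr_gt0.
  by rewrite -/l -e; exact: inE.
have hb : s^-1 * b <= wNe ip N B C'.
  have e : op_add (op_scale l B) (op_scale (- l) C') = op_scale l (op_sub B C').
    by apply: funext => x; rewrite /op_add /op_scale /op_sub scalerBr scaleNr.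
  apply: le_trans (scale_lower (s^-1) bM _) _; first by rewrite invr_gt0.
  by rewrite -/l -e; exact: inE.
by have [h|h] := leP a b.
Qed.
End IP.

Theorem theorem2p7 (R : realType) (H : lmodType R[i]) (ip : H -> H -> R[i])
    (N : (H -> H) -> R) (B C : H -> H) :
  is_hilbert ip -> is_op_norm ip N -> bounded_op ip B -> bounded_op ip C ->
  (Num.sqrt 2)^-1 * Num.max (wN ip N (op_add B C)) (wN ip N (op_sub B C))
    <= wNe ip N B C /\
  wNe ip N B C <= (Num.sqrt 2)^-1 *
    Num.sqrt (wN ip N (op_add B C) ^+ 2 + wN ip N (op_sub B C) ^+ 2).
Proof.
move=> [ipH hc] hN bB bC.
exact: (@main_sec R H ip ipH hc N hN B C bB bC).
Qed.
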